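(* Let $f:\mathbb{R}^n\to\mathbb{R}$ be differentiable, let $g:\mathbb{R}^n\to\mathbb{R}\cup\{+\infty\}$ be proper and convex, $F=f+g$, $F^*=\inf F>-\infty$. For $L>0$ and $p\in\{1,2\}$ and $x\in\mathrm{dom}\,g$ set \[ \mathcal{D}_p(x,L)=-2L\min_{y}\Big\{\nabla f(x)^\top(y-x)+\tfrac{L}{2}\|y-x\|_p^2+g(y)-g(x)\Big\}. \] Let $L_1,L_2>0$ satisfy $L_2/n\le L_1\le L_2$. (i) If $\mu_2>0$ satisfies $\frac12\mathcal{D}_2(x,L_2)\ge\mu_2(F(x)-F^* )$ for all $x\in\mathrm{dom}\,g$, then $\frac12\mathcal{D}_1(x,L_1)\ge\frac{\mu_2}{n}(F(x)-F^* )$ for all $x\in\mathrm{dom}\,g$. (ii) If $\mu_1>0$ satisfies $\frac12\mathcal{D}_1(x,L_1)\ge\mu_1(F(x)-F^* )$ for all $x\in\mathrm{dom}\,g$, then $\frac12\mathcal{D}_2(x,L_2)\ge\mu_1(F(x)-F^* )$ for all $x\in\mathrm{dom}\,g$. Thus the best proximal-PL constants satisfy $\mu_2/n\le\mu_1\le\mu_2$.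
   Context: The inequality $\frac12\mathcal{D}_p(x,L)\ge\mu(F(x)-F^* )$ for all feasible $x$ is the proximal-PL condition in the $p$-norm with constants $L,\mu$; constraints (such as $\sum_m x_m=\gamma$ or bounds) are encoded in $g$ as an indicator function. *)

(* Defs.v *)
From HB Require Import structures.
From mathcomp Require Import all_boot all_order all_algebra.
From mathcomp Require Import all_classical all_reals all_analysis.
Set Implicit Arguments. Unset Strict Implicit. Unset Printing Implicit Defensive.
Import Order.TTheory GRing.Theory Num.Theory.
Import numFieldNormedType.Exports.
Local Open Scope classical_set_scope.
Local Open Scope ring_scope.

Section Defs.
Variables (R : realType) (n : nat).

Definition norm1 (v : 'rV[R]_n) : R := \sum_(i < n) `|v ord0 i|.
Definition norm2 (v : 'rV[R]_n) : R := Num.sqrt (\sum_(i < n) (v ord0 i) ^+ 2).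

Definition dom (g : 'rV[R]_n -> \bar R) : set 'rV[R]_n :=
  [set x | (g x < +oo)%E].

Definition proper_fun (g : 'rV[R]_n -> \bar R) : Prop :=
  (forall x, g x != -oo%E) /\ (exists x, (g x < +oo)%E).

(* convexity of an extended-real valued function (convention 0 * (+oo) = 0) *)
Definition convex_fun (g : 'rV[R]_n -> \bar R) : Prop :=
  forall (x y : 'rV[R]_n) (t : R), 0 <= t <= 1 ->
    (g ((1 - t) *: x + t *: y)%R <= (1 - t)%:E * g x + t%:E * g y)%E.

(* objective of the proximal subproblem, nrm = ||.||_p :
   grad f(x)^T (y - x) + L/2 ||y-x||_p^2 + g(y) - g(x),
   where grad f(x)^T h is the differential 'd f x h *)
Definition prox_obj (f : 'rV[R]_n -> R) (g : 'rV[R]_n -> \bar R)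
  (nrm : 'rV[R]_n -> R) (L : R) (x y : 'rV[R]_n) : \bar R :=
  (('d f x (y - x) + L / 2 * nrm (y - x) ^+ 2)%:E + g y - g x)%E.

(* D_p(x, L) = -2L min_y { ... }  (the min is taken as an infimum) *)
Definition Dp (f : 'rV[R]_n -> R) (g : 'rV[R]_n -> \bar R)
  (nrm : 'rV[R]_n -> R) (x : 'rV[R]_n) (L : R) : \bar R :=
  ((- (2 * L))%:E * ereal_inf (range (prox_obj f g nrm L x)))%E.

Definition D1 f g x L := Dp f g norm1 x L.
Definition D2 f g x L := Dp f g norm2 x L.

End Defs.

(* Main.v *)
Require Import Defs.
From HB Require Import structures.
From mathcomp Require Import all_boot all_order all_algebra.
From mathcomp Require Import all_classical all_reals all_analysis.
Import Order.TTheory GRing.Theory Num.Theory.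
Import numFieldNormedType.Exports.
Local Open Scope classical_set_scope.
Local Open Scope ring_scope.
From mathcomp Require Import ring lra.
Set Implicit Arguments. Unset Strict Implicit.

Lemma sum_sq_le (R : realType) m (a : 'I_m -> R) :
  (forall i, 0 <= a i) -> \sum_(i < m) a i ^+ 2 <= (\sum_(i < m) a i) ^+ 2.
Proof.
elim: m a => [|m IH] a a0; first by rewrite !big_ord0 expr0n.
rewrite !big_ord_recr /=.
have := IH (fun i => a (widen_ord (leqnSn m) i)) (fun i => a0 _).
have S0 : 0 <= \sum_(i < m) a (widen_ord (leqnSn m) i) by apply: sumr_ge0.
have := a0 ord_max.
set S := \sum_(i < m) a (widen_ord _ i); set T := \sum_(i < m) a (widen_ord _ i) ^+ 2; set b := a ord_max.
move=> b0 h; have := mulr_ge0 S0 b0; rewrite sqrrD -/S; lra.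
Qed.

Lemma sum_dev (R : realType) m (a : 'I_m -> R) (b : R) :
  \sum_(i < m) (a i - b) ^+ 2 =
  \sum_(i < m) a i ^+ 2 - 2 * b * \sum_(i < m) a i + m%:R * b ^+ 2.
Proof.
under eq_bigr => i _ do rewrite sqrrB.
rewrite big_split /= sumrB mulr_sumr sumr_const card_ord.
congr (_ - _ + _); last by rewrite mulr_natl.
by apply: eq_bigr => i _; rewrite mulr2n; ring.
Qed.

Lemma cs_sum (R : realType) m (a : 'I_m -> R) :
  (\sum_(i < m) a i) ^+ 2 <= m%:R * \sum_(i < m) a i ^+ 2.
Proof.
elim: m a => [|m IH] a; first by rewrite !big_ord0 expr0n mul0r.
rewrite !big_ord_recr /=.
have h1 := IH (fun i => a (widen_ord (leqnSn m) i)).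
have h2 : 0 <= \sum_(i < m) (a (widen_ord (leqnSn m) i) - a ord_max) ^+ 2.
  by apply: sumr_ge0 => i _; apply: sqr_ge0.
rewrite sum_dev in h2.
move: h1 h2.
set S := \sum_(i < m) a (widen_ord _ i); set T := \sum_(i < m) a (widen_ord _ i) ^+ 2; set b := a ord_max.
rewrite -natr1 => h1 h2; nra.
Qed.

Section N.
Variables (R : realType) (n : nat).

Lemma norm2_sq (v : 'rV[R]_n) : norm2 v ^+ 2 = \sum_(i < n) v ord0 i ^+ 2.
Proof. by rewrite /norm2 sqr_sqrtr // sumr_ge0 // => i _; apply: sqr_ge0. Qed.

Lemma norm1_ge0 (v : 'rV[R]_n) : 0 <= norm1 v.
Proof. by apply: sumr_ge0 => i _. Qed.

Lemma norm2_ge0 (v : 'rV[R]_n) : 0 <= norm2 v.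
Proof. exact: sqrtr_ge0. Qed.

Lemma norm21 (v : 'rV[R]_n) : norm2 v ^+ 2 <= norm1 v ^+ 2.
Proof.
rewrite norm2_sq /norm1.
have -> : \sum_(i < n) v ord0 i ^+ 2 = \sum_(i < n) `|v ord0 i| ^+ 2.
  by apply: eq_bigr => i _; rewrite real_normK // num_real.
by apply: sum_sq_le.
Qed.

Lemma norm12 (v : 'rV[R]_n) : norm1 v ^+ 2 <= n%:R * norm2 v ^+ 2.
Proof.
rewrite norm2_sq /norm1.
have -> : \sum_(i < n) v ord0 i ^+ 2 = \sum_(i < n) `|v ord0 i| ^+ 2.
  by apply: eq_bigr => i _; rewrite real_normK // num_real.
exact: cs_sum.
Qed.

Lemma norm1Z (a : R) (v : 'rV[R]_n) : 0 <= a -> norm1 (a *: v) = a * norm1 v.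
Proof.
move=> a0; rewrite /norm1 mulr_sumr; apply: eq_bigr => i _.
by rewrite mxE normrM ger0_norm.
Qed.

Lemma norm2Z (a : R) (v : 'rV[R]_n) : 0 <= a -> norm2 (a *: v) = a * norm2 v.
Proof.
move=> a0; rewrite /norm2.
have -> : \sum_(i < n) (a *: v) ord0 i ^+ 2 = a ^+ 2 * \sum_(i < n) v ord0 i ^+ 2.
  by rewrite mulr_sumr; apply: eq_bigr => i _; rewrite mxE exprMn.
by rewrite sqrtrM ?sqr_ge0 // sqrtr_sqr ger0_norm.
Qed.

Lemma norm1_0 : norm1 (0 : 'rV[R]_n) = 0.
Proof. by rewrite -(scale0r 0) norm1Z // mul0r. Qed.
Lemma norm2_0 : norm2 (0 : 'rV[R]_n) = 0.
Proof. by rewrite -(scale0r 0) norm2Z // mul0r. Qed.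
End N.

Section M.
Variables (R : realType) (n : nat) (f : 'rV[R]_n -> R) (g : 'rV[R]_n -> \bar R).
Variables (x : 'rV[R]_n) (gx : R).
Hypothesis gxE : g x = gx%:E.
Hypothesis gnoo : forall y, g y != -oo%E.

Definition I nrm L := ereal_inf (range (prox_obj f g nrm L x)).

Lemma I_le0 nrm L : nrm 0 = 0 -> (I nrm L <= 0)%E.
Proof.
move=> n0; apply: le_trans (ereal_inf_lbound _) _; first by exists x.
rewrite /prox_obj subrr linear0 n0 expr0n /= mulr0 addr0. by rewrite gxE add0e subee.
Qed.

Lemma I_cmp n1 n2 L1 L2 :
  (forall h, L1 / 2 * n1 h ^+ 2 <= L2 / 2 * n2 h ^+ 2) -> (I n1 L1 <= I n2 L2)%E.
Proof.
move=> H; apply: le_ereal_inf_tmp => _ [y _ <-].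
apply: le_trans (ereal_inf_lbound _) _; first by exists y.
rewrite /prox_obj gxE; apply: leeD2r; apply: leeD2r.
by rewrite lee_fin; apply: lerD.
Qed.

Lemma I_mono nrm L L' : 0 < L -> L <= L' ->
  (forall a v, 0 <= a -> nrm (a *: v) = a * nrm v) ->
  (forall v, 0 <= nrm v) ->
  convex_fun g ->
  ((L' / L)%:E * I nrm L' <= I nrm L)%E.
Proof.
move=> L0 LL' hom nn cvx; apply: le_ereal_inf_tmp => _ [y _ <-].
rewrite /prox_obj gxE.
case Ey: (g y) => [gy| |]; last first.
- by move: (gnoo y); rewrite Ey.
- by rewrite /= leey.
have L'0 : 0 < L' by apply: lt_le_trans LL'.
set t := L / L'.
have t0 : 0 <= t by rewrite divr_ge0 // ltW.
have t1 : t <= 1 by rewrite ler_pdivrMr // mul1r.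
have := cvx x y t; rewrite t0 t1 => /(_ isT).
set y' := (1 - t) *: x + t *: y.
rewrite gxE Ey -!EFinM -EFinD.
have : g y' != -oo%E by exact: gnoo.
case Ey': (g y') => [gy'| |] // _; rewrite lee_fin => cv.
have hy' : y' - x = t *: (y - x).
  rewrite /y' scalerBl scale1r scalerBr. by rewrite addrAC [x - t *: x]addrC addrK addrC.
apply: le_trans (_ : (L' / L)%:E * prox_obj f g nrm L' x y' <= _)%E.
  apply: lee_wpmul2l; first by rewrite lee_fin divr_ge0 // ltW.
  by apply: ereal_inf_lbound; exists y'.
rewrite /prox_obj hy' linearZ /= hom // gxE Ey' ?EFinN -!EFinD -EFinM lee_fin -[t *: _]/(t * _).
have tL : L' * t = L by rewrite /t mulrCA divff ?mulr1 // (gt_eqF L'0).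
have tne : t != 0 by rewrite /t mulf_neq0 ?invr_eq0 ?(gt_eqF L0) ?(gt_eqF L'0).
have -> : L' / L = t^-1 by rewrite /t invfM invrK mulrC.
set d := 'd f x (y - x); set N := nrm (y - x).
have e : t ^-1 * (t * d + L' / 2 * (t * N) ^+ 2 + gy' - gx)
   = d + L / 2 * N ^+ 2 + (gy' - gx) / t.
  rewrite -tL; field; exact: tne.
rewrite e; suff : (gy' - gx) / t <= gy - gx by lra.
rewrite ler_pdivrMr ?lt_def ?tne //.
nra.
Qed.
End M.

Lemma negmul_flip (R : realType) (c : R) (a b : \bar R) : 0 <= c ->
  ((c%:E * a) <= (c%:E * b))%E -> ((- c)%:E * b <= (- c)%:E * a)%E.
Proof. by move=> c0 h; rewrite EFinN !mulNe leeN2. Qed.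

Lemma Dmono (R : realType) n f g x gx nrm (L L' : R) :
  g x = gx%:E -> (forall y, g y != -oo%E) -> 0 < L -> L <= L' ->
  (forall a v, 0 <= a -> nrm (a *: v) = a * nrm v) ->
  (forall v, 0 <= nrm v) -> convex_fun g ->
  ((- (2 * L))%:E * I f g x nrm L <= (- (2 * L'))%:E * I (n:=n) f g x nrm L')%E.
Proof.
move=> gxE gn L0 LL' hom nn cvx; rewrite !EFinN !mulNe leeN2.
have -> : 2 * L' = 2 * L * (L' / L) by field; rewrite gt_eqF.
rewrite EFinM -muleA; apply: lee_wpmul2l; first by rewrite lee_fin mulr_ge0 // ltW.
exact: (I_mono f gxE gn L0 LL' hom nn cvx).
Qed.

Lemma Dcmp (R : realType) n f g x n1 n2 (L1 L2 L : R) : 0 <= L ->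
  (I f g x n1 L1 <= I (n:=n) f g x n2 L2)%E ->
  ((- (2 * L))%:E * I f g x n2 L2 <= (- (2 * L))%:E * I (n:=n) f g x n1 L1)%E.
Proof.
move=> L0 h; apply: negmul_flip; first by rewrite mulr_ge0.
by apply: lee_wpmul2l => //; rewrite lee_fin mulr_ge0.
Qed.

Lemma Dge0 (R : realType) n f g x gx nrm (L : R) : g x = gx%:E -> 0 <= L ->
  nrm 0 = 0 -> (0 <= (- (2 * L))%:E * I (n:=n) f g x nrm L)%E.
Proof.
move=> gxE L0 n0; apply: mule_le0; last exact: (I_le0 f gxE L n0).
by rewrite lee_fin oppr_le0 mulr_ge0.
Qed.

Unset Implicit Arguments.
Theorem lemmaC1 (R : realType) (n : nat)
  (f : 'rV[R]_n -> R) (g : 'rV[R]_n -> \bar R) (Fstar L1 L2 : R) :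
  (forall x, differentiable f x) ->
  proper_fun g -> convex_fun g ->
  ereal_inf (range (fun x => ((f x)%:E + g x)%E)) = Fstar%:E ->
  0 < L1 -> 0 < L2 -> L2 / n%:R <= L1 -> L1 <= L2 ->
  (forall mu2 : R, 0 < mu2 ->
     (forall x, dom g x ->
        ((mu2%:E * ((f x)%:E + g x - Fstar%:E)) <= (2^-1)%:E * D2 f g x L2)%E) ->
     (forall x, dom g x ->
        (((mu2 / n%:R)%:E * ((f x)%:E + g x - Fstar%:E)) <= (2^-1)%:E * D1 f g x L1)%E))
  /\
  (forall mu1 : R, 0 < mu1 ->
     (forall x, dom g x ->
        ((mu1%:E * ((f x)%:E + g x - Fstar%:E)) <= (2^-1)%:E * D1 f g x L1)%E) ->
     (forall x, dom g x ->
        ((mu1%:E * ((f x)%:E + g x - Fstar%:E)) <= (2^-1)%:E * D2 f g x L2)%E)).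
Proof.
move=> _ [gn _] cvx _ L10 L20 L21 L12.
have hom1 := @norm1Z R n; have hom2 := @norm2Z R n.
have nn1 := @norm1_ge0 R n; have nn2 := @norm2_ge0 R n.
have gfin : forall x, dom g x -> g x = (fine (g x))%:E.
  move=> x dx; rewrite fineK // fin_numE gn /=; move: dx; rewrite /dom /=; move=> dx. by rewrite (lt_eqF dx).
split.
- move=> mu2 mu20 H2 x dx.
  have H := H2 x dx; move: H.
  rewrite /D1 /D2 /Dp -/(I f g x (@norm2 R n) L2) -/(I f g x (@norm1 R n) L1).
  rewrite (gfin x dx) -!EFinD => H.
  have D1ge0 := Dge0 f (gfin x dx) (ltW L10) (@norm1_0 R n).
  have [n0|npos] := eqVneq n 0%N.
    have -> : (n%:R : R) = 0 by rewrite n0.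
    rewrite invr0 mulr0 mul0e; apply: mule_ge0 => //; rewrite lee_fin; lra.
  have nR : 0 < (n%:R : R) by rewrite ltr0n lt0n.
  set F := f x + fine (g x) - Fstar.
  set L := L2 / n%:R.
  have L0 : 0 < L by rewrite divr_gt0.
  apply: le_trans (_ : (2^-1)%:E * ((- (2 * L))%:E * I f g x (@norm1 R n) L) <= _)%E; last first.
    apply: lee_wpmul2l; first by rewrite lee_fin.
    exact: (Dmono f (gfin x dx) gn L0 L21 hom1 nn1 cvx).
  apply: le_trans (_ : (2^-1)%:E * ((- (2 * L))%:E * I f g x (@norm2 R n) L2) <= _)%E; last first.
    apply: lee_wpmul2l; first by rewrite lee_fin.
    apply: Dcmp; first by rewrite ltW.
    apply: (I_cmp f (gfin x dx)) => h.
    have := norm12 h; have := sqr_ge0 (norm2 h).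
    rewrite /L => a b.
    have -> : L2 / 2 * norm2 h ^+ 2 = L2 / n%:R / 2 * (n%:R * norm2 h ^+ 2).
      by field; rewrite gt_eqF.
    by apply: ler_wpM2l => //; rewrite divr_ge0 // ltW.
  have -> : ((2^-1)%:E * ((- (2 * L))%:E * I f g x (@norm2 R n) L2) =
            (n%:R^-1)%:E * ((2^-1)%:E * ((- (2 * L2))%:E * I f g x (@norm2 R n) L2)))%E.
    rewrite !muleA -!EFinM; congr (_%:E * _)%E; by rewrite /L; field; rewrite gt_eqF.
  have -> : ((mu2 / n%:R)%:E * F%:E = (n%:R^-1)%:E * (mu2%:E * F%:E))%E.
    by rewrite muleA -!EFinM; congr _%:E; ring.
  by apply: lee_wpmul2l => //; rewrite lee_fin invr_ge0 ltW.
- move=> mu1 mu10 H1 x dx.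
  apply: le_trans (H1 x dx) _.
  rewrite /D1 /D2 /Dp -/(I f g x (@norm2 R n) L2) -/(I f g x (@norm1 R n) L1).
  apply: lee_wpmul2l; first by rewrite lee_fin.
  apply: le_trans (_ : (- (2 * L1))%:E * I f g x (@norm2 R n) L1 <= _)%E.
    apply: Dcmp; first exact: ltW.
    apply: (I_cmp f (gfin x dx)) => h.
    by apply: ler_wpM2l; [rewrite divr_ge0 // ltW | exact: norm21].
  exact: (Dmono f (gfin x dx) gn L10 L12 hom2 nn2 cvx).
Qed.
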